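(* Let $q$ be a prime power and let $\ell\ge 2$. There is a constant $c_\ell>0$ depending only on $\ell$ such that the following holds. Let $n\le m$ and let $C\subseteq\mathbb{F}_{q^m}^n$ be an MRD code of rate $R$ that is $\big(\frac{\ell(1-R)}{\ell+1},\ell\big)$-average-radius list decodable in the rank metric. Then $m\ge c_\ell\,(nR-1)(n-\ell-nR+1)$. In particular, if $R\in[c,\,1-c-\ell/n]$ for some constant $c>0$, then $m=\Omega_{\ell,c}(n^2)$.
   Context: For $\bm{v}=(v_1,\dots,v_n)\in\mathbb{F}_{q^m}^n$, $\mathrm{rank}_{\mathbb{F}_q}(\bm{v})=\dim_{\mathbb{F}_q}\mathrm{span}_{\mathbb{F}_q}\{v_1,\dots,v_n\}$ (equivalently the rank of $\bm{v}$ viewed as an $m\times n$ matrix over $\mathbb{F}_q$) and $d_R(\bm{u},\bm{v})=\mathrm{rank}_{\mathbb{F}_q}(\bm{u}-\bm{v})$. A code is a subset $C\subseteq\mathbb{F}_{q^m}^n$; its rate is $R=\log_q|C|/(nm)$ and its minimum distance $d$ is the minimum of $d_R$ over distinct codewords. $C$ is MRD if it attains the Singleton bound, i.e. $|C|=q^{m(n-d+1)}$. $C$ is $(\rho,\ell)$-average-radius list decodable if for every $\bm{y}\in\mathbb{F}_{q^m}^n$ and every $\ell+1$ distinct codewords $\bm{c}_0,\dots,\bm{c}_\ell$, $\frac{1}{\ell+1}\sum_{i=0}^\ell d_R(\bm{y},\bm{c}_i)>\rho n$. *)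

(* Defs.v *)
From HB Require Import structures.
From mathcomp Require Import all_boot all_order all_algebra all_field.
From mathcomp Require Import reals exp.
Set Implicit Arguments. Unset Strict Implicit. Unset Printing Implicit Defensive.
Import Order.TTheory GRing.Theory Num.Theory.
Local Open Scope ring_scope.

(* F plays F_q, L : fieldExtType F plays F_{q^m} with m = \dim {:L};
   codewords are row vectors in L^n. *)

Definition rk_vec {F : fieldType} {L : fieldExtType F} {n : nat}
  (v : 'rV[L]_n) : nat :=
  \dim <<[seq v ord0 i | i <- enum 'I_n]>>%VS.

Definition dR {F : fieldType} {L : fieldExtType F} {n : nat}
  (u v : 'rV[L]_n) : nat := rk_vec (u - v).

(* A code is a finite set of codewords, given as a duplicate-free list. *)
Definition min_dist {F : fieldType} {L : fieldExtType F} {n : nat}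
  (C : seq 'rV[L]_n) (d : nat) : Prop :=
  (exists u v, [/\ u \in C, v \in C, u != v & dR u v = d]) /\
  (forall u v, u \in C -> v \in C -> u != v -> (d <= dR u v)%N).

Definition is_MRD {F : finFieldType} {L : fieldExtType F} {n : nat}
  (C : seq 'rV[L]_n) : Prop :=
  exists d, min_dist C d /\ size C = (#|F| ^ (\dim {:L} * (n - d + 1)))%N.

Definition rate (R : realType) {F : finFieldType} {L : fieldExtType F} {n : nat}
  (C : seq 'rV[L]_n) : R :=
  ln ((size C)%:R) / ln (#|F|%:R) / (n * \dim {:L})%:R.

Definition avg_list_decodable (R : realType) {F : fieldType} {L : fieldExtType F}
  {n : nat} (C : seq 'rV[L]_n) (rho : R) (l : nat) : Prop :=
  forall (y : 'rV[L]_n) (c : 'I_l.+1 -> 'rV[L]_n),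
    injective c -> (forall i, c i \in C) ->
    (l.+1%:R)^-1 * (\sum_(i < l.+1) (dR y (c i))%:R) > rho * n%:R.

(* Main.v *)
Require Import Defs.
From HB Require Import structures.
From mathcomp Require Import all_boot all_order all_algebra all_field.
From mathcomp Require Import reals exp.
From mathcomp Require Import ring lra zify.
Set Implicit Arguments. Unset Strict Implicit. Unset Printing Implicit Defensive.
Import Order.TTheory GRing.Theory Num.Theory VectorInternalTheory.
Local Open Scope ring_scope.


Lemma rk_leU (F : fieldType) (L : fieldExtType F) (n : nat) (v : 'rV[L]_n)
  (U : {vspace L}) : (forall i, v ord0 i \in U) -> (rk_vec v <= \dim U)%N.
Proof.
move=> H; rewrite /rk_vec; apply: dimvS; apply/span_subvP => x /mapP[i _ ->].
exact: H.
Qed.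

Lemma rk_le_span (F : fieldType) (L : fieldExtType F) (n : nat) (v : 'rV[L]_n)
  (s : seq L) : (forall i, v ord0 i \in <<s>>%VS) -> (rk_vec v <= size s)%N.
Proof. by move=> H; apply: leq_trans (rk_leU H) (dim_span _). Qed.

Lemma rk_le_n (F : fieldType) (L : fieldExtType F) (n : nat) (v : 'rV[L]_n) :
  (rk_vec v <= n)%N.
Proof.
rewrite /rk_vec; apply: leq_trans (dim_span _) _.
by rewrite size_map size_enum_ord.
Qed.

Lemma pigeon (T K : finType) (S : {set T}) (f : T -> K) (l : nat) :
  (l.-1 * #|K| < #|S|)%N -> exists k, (l <= #|[set t in S | f t == k]|)%N.
Proof.
move=> H; apply/existsP; apply: contraLR H => /existsPn H.
rewrite -leqNgt.
have -> : #|S| = (\sum_(t in S) 1)%N by rewrite sum1_card.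
rewrite (partition_big f predT) //=.
rewrite mulnC -sum_nat_const; apply: leq_sum => k _.
have := H k; rewrite -ltnNge => Hk.
have -> : (\sum_(i | (i \in S) && (f i == k)) 1 = #|[set t in S | f t == k]|)%N.
  by rewrite sum1_card; apply: eq_card => t; rewrite inE.
by rewrite -ltnS; move: Hk; case: (l) => // l0 /=; rewrite ltnS.
Qed.


Definition psi (F : finFieldType) (L : fieldExtType F) (p e : nat)
  (A : 'M[F]_(p, e.+2)) (x : 'rV[L]_(p + e.+2)) :
  {ffun 'I_p -> 'rV[F]_(dim L)} * 'rV[F]_(dim L) :=
 ([ffun a => v2r (x ord0 (lshift e.+2 a) + \sum_j A a j *: x ord0 (rshift p j))],
  v2r (x ord0 (rshift p ord0))).

Lemma homog_rk (F : finFieldType) (L : fieldExtType F) (p e : nat)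
  (A : 'M[F]_(p, e.+2)) (x : 'rV[L]_(p + e.+2)) :
  (forall a, x ord0 (lshift e.+2 a) + \sum_j A a j *: x ord0 (rshift p j) = 0) ->
  x ord0 (rshift p ord0) = 0 -> (rk_vec x <= e.+1)%N.
Proof.
move=> H1 H0.
have := @rk_le_span _ _ _ x [seq x ord0 (rshift p (lift ord0 j)) | j <- enum 'I_e.+1].
rewrite size_map size_enum_ord; apply => i.
rewrite -(splitK i); case: (split i) => [a|j] /=.
- have /eqP := H1 a; rewrite addr_eq0 => /eqP ->.
  rewrite memvN big_ord_recl H0 scaler0 add0r; apply: memv_suml => j _.
  by apply: memvZ; apply: memv_span; apply: map_f; rewrite mem_enum.
- case: (unliftP ord0 j) => [j'|] ->; last by rewrite H0 mem0v.
  by apply: memv_span; apply: map_f; rewrite mem_enum.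
Qed.

Lemma gB (F : finFieldType) (L : fieldExtType F) (p e : nat)
  (A : 'M[F]_(p, e.+2)) (y z : 'rV[L]_(p + e.+2)) a :
  (y - z) ord0 (lshift e.+2 a) + \sum_j A a j *: (y - z) ord0 (rshift p j) =
  (y ord0 (lshift e.+2 a) + \sum_j A a j *: y ord0 (rshift p j)) -
  (z ord0 (lshift e.+2 a) + \sum_j A a j *: z ord0 (rshift p j)).
Proof.
rewrite !mxE.
have -> : \sum_j A a j *: (y - z) ord0 (rshift p j) =
  \sum_j (A a j *: y ord0 (rshift p j) - A a j *: z ord0 (rshift p j)).
  by apply: eq_bigr => j _; rewrite !mxE scalerBr.
by rewrite sumrB addrACA -opprD.
Qed.

Lemma exists_w (F : finFieldType) (L : fieldExtType F) (p e : nat)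
  (C : seq 'rV[L]_(p + e.+2)) (c0 : 'rV[L]_(p + e.+2)) :
  uniq C ->
  (forall u v, u \in C -> v \in C -> u != v -> (e.+2 <= dR u v)%N) ->
  size C = (#|F| ^ (\dim {:L} * p.+1))%N ->
  forall A t, exists w, (w \in C) && (psi A (w - c0) == t).
Proof.
move=> Cu Cmin Csize A t.
pose f w := psi A (w - c0).
have finj : {in C &, injective f}.
  move=> u v uC vC E; apply/eqP; apply: contraT => neq.
  have H := Cmin u v uC vC neq.
  suff : (dR u v <= e.+1)%N by rewrite leqNgt H.
  rewrite /dR; apply: (homog_rk (A := A)).
  - move=> a; have := congr1 (fun z : {ffun 'I_p -> 'rV[F]_(dim L)} * 'rV[F]_(dim L) => z.1 a) E; rewrite /f /psi /= !ffunE.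
    move/v2r_inj => Ea.
    have -> : u - v = (u - c0) - (v - c0) by rewrite opprB addrA subrK.
    by rewrite gB Ea subrr.
  - have := congr1 snd E; rewrite /f /psi /= => /v2r_inj.
    by rewrite !mxE => /addIr ->; rewrite subrr.
have Us : uniq (map f C) by rewrite map_inj_in_uniq.
have : t \in map f C.
  have Hc : #|map f C| = #|{: {ffun 'I_p -> 'rV[F]_(dim L)} * 'rV[F]_(dim L)}|.
    rewrite (card_uniqP Us) size_map Csize card_prod card_ffun !card_mx card_ord.
    by rewrite mul1n -expnM -expnD dimvf mulnS addnC.
  have := cardC (mem (map f C)); rewrite Hc -[X in _ = X]addn0 => /eqP.
  rewrite eqn_add2l => /eqP /card0_eq /(_ t) /=.
  by rewrite !inE => /negbFE.
by case/mapP => w wC ->; exists w; rewrite wC eqxx.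
Qed.


Definition Yv (F : finFieldType) (L : fieldExtType F) (p e : nat)
  (al be : 'I_p -> F) (lam b : L) : 'rV[L]_(p + e.+2) :=
  \row_i match split i with
         | inl a => - (al a *: lam + be a *: b)
         | inr j => if j == ord0 then lam
                    else if j == lift ord0 ord0 then b else 0 end.

Lemma Yv_rk (F : finFieldType) (L : fieldExtType F) (p e : nat)
  (al be : 'I_p -> F) (lam b : L) : (rk_vec (Yv e al be lam b) <= 2)%N.
Proof.
apply: (@rk_le_span _ _ _ _ [:: lam; b]) => i; rewrite mxE.
have Hl : lam \in <<[:: lam; b]>>%VS by apply: memv_span; rewrite inE eqxx.
have Hb : b \in <<[:: lam; b]>>%VS by apply: memv_span; rewrite !inE eqxx orbT.
case: (split i) => [a|j].
  by rewrite memvN memvD // memvZ.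
by case: ifP => // _; case: ifP => // _; rewrite mem0v.
Qed.

Lemma lemZ (V : zmodType) (c y w : V) : c + y - w = y - (w - c).
Proof. by rewrite opprB (addrC c) addrA. Qed.

Lemma Yx_rk (F : finFieldType) (L : fieldExtType F) (p e : nat)
  (A : 'M[F]_(p, e.+2)) (x : 'rV[L]_(p + e.+2)) :
  (forall a, x ord0 (lshift e.+2 a) + \sum_j A a j *: x ord0 (rshift p j) = 0) ->
  (rk_vec (Yv e (fun a => A a ord0) (fun a => A a (lift ord0 ord0))
     (x ord0 (rshift p ord0)) (x ord0 (rshift p (lift ord0 ord0))) - x) <= e)%N.
Proof.
move=> H1.
have := @rk_le_span _ _ _ (Yv e (fun a => A a ord0) (fun a => A a (lift ord0 ord0))
     (x ord0 (rshift p ord0)) (x ord0 (rshift p (lift ord0 ord0))) - x)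
  [seq x ord0 (rshift p (lift ord0 (lift ord0 j))) | j <- enum 'I_e].
rewrite size_map size_enum_ord; apply => i.
have HU : forall j, x ord0 (rshift p (lift ord0 (lift ord0 j))) \in
   <<[seq x ord0 (rshift p (lift ord0 (lift ord0 j))) | j <- enum 'I_e]>>%VS.
  by move=> j; apply: memv_span; apply: map_f; rewrite mem_enum.
have sl : forall a : 'I_p, split (lshift e.+2 a) = inl a := fun a => unsplitK (inl a).
have sr : forall j : 'I_e.+2, split (rshift p j) = inr j := fun j => unsplitK (inr j).
rewrite !mxE -(splitK i); case: (split i) => [a|j] /=; rewrite ?sl ?sr.
- have /eqP := H1 a; rewrite addr_eq0 => /eqP ->.
  rewrite big_ord_recl big_ord_recl addrA opprK addKr.
  by apply: memv_suml => j _; apply: memvZ.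
- case: (unliftP ord0 j) => [j'|] ->; last by rewrite eqxx subrr mem0v.
  rewrite eq_sym (negbTE (neq_lift _ _)).
  case: (unliftP ord0 j') => [j''|] ->; first last.
    by rewrite eqxx subrr mem0v.
  rewrite (inj_eq lift_inj) eq_sym (negbTE (neq_lift _ _)) sub0r memvN.
  exact: HU.
Qed.


Lemma eq_Yv (F : finFieldType) (L : fieldExtType F) (p e : nat)
  (al al' be be' : 'I_p -> F) (lam b : L) :
  (forall a, al a = al' a) -> (forall a, be a = be' a) ->
  Yv e al be lam b = Yv e al' be' lam b.
Proof.
move=> H1 H2; apply/rowP => i; rewrite !mxE.
by case: (split i) => // a; rewrite H1 H2.
Qed.

Lemma key_bound (F : finFieldType) (L : fieldExtType F) (p e l : nat)
  (C : seq 'rV[L]_(p + e.+2)) (c0 : 'rV[L]_(p + e.+2)) :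
  (2 <= l)%N -> uniq C -> c0 \in C ->
  (forall u v, u \in C -> v \in C -> u != v -> (e.+2 <= dR u v)%N) ->
  size C = (#|F| ^ (\dim {:L} * p.+1))%N ->
  (forall y (c : 'I_l.+1 -> 'rV[L]_(p + e.+2)), injective c ->
     (forall i, c i \in C) -> (l * e.+1 < \sum_i dR y (c i))%N) ->
  (#|F| ^ (p * e.+2) * (#|F| ^ dim L).-1 <=
     l.-1 * (#|F| ^ p * #|F| ^ p * #|F| ^ dim L * #|F| ^ dim L))%N.
Proof.
move=> hl Cu c0C Cmin Csize Hdec.
have exw := exists_w c0 Cu Cmin Csize.
pose T := ('M[F]_(p, e.+2) * 'rV[F]_(dim L))%type.
pose w (th : T) := xchoose (exw th.1 ([ffun=> 0], th.2)).
have wP : forall th, (w th \in C) &&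
    (psi th.1 (w th - c0) == ([ffun=> 0], th.2)).
  by move=> th; rewrite /w; apply: (xchooseP (exw th.1 ([ffun=> 0], th.2))).
have wC : forall th, w th \in C by move=> th; case/andP: (wP th).
have hx1 : forall th a, (w th - c0) ord0 (lshift e.+2 a) +
    \sum_j th.1 a j *: (w th - c0) ord0 (rshift p j) = 0.
  move=> th a; case/andP: (wP th) => _ /eqP E.
  have := congr1 (fun z : {ffun 'I_p -> 'rV[F]_(dim L)} * 'rV[F]_(dim L) => z.1 a) E.
  rewrite /psi /= !ffunE => /(congr1 r2v); rewrite v2rK => ->.
  exact: linear0.
have hx0 : forall th, (w th - c0) ord0 (rshift p ord0) = r2v th.2.
  move=> th; case/andP: (wP th) => _ /eqP E.
  by have := congr1 snd E; rewrite /psi /= => <-; rewrite v2rK.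
pose S := setX [set: 'M[F]_(p, e.+2)] [set~ (0 : 'rV[F]_(dim L))].
have inS : forall th, th \in S -> th.2 != 0.
  by case=> A t; rewrite in_setX !inE.
have wne : forall th, th \in S -> w th != c0.
  move=> th /inS; apply: contra => /eqP E.
  have := hx0 th; rewrite E subrr mxE => /esym H.
  by apply/eqP; apply: r2v_inj; rewrite H linear0.
have winj : {in S &, injective w}.
  move=> th th' thS th'S E.
  set x := w th - c0.
  have E' : w th' - c0 = x by rewrite -E.
  pose z := [tuple x ord0 (rshift p j) | j < e.+2].
  have hz : free z.
    have h1 : (e.+2 <= rk_vec x)%N by apply: Cmin => //; apply: wne.
    have h2 : (rk_vec x <= \dim <<z>>)%N.
      apply: rk_leU => i.
      rewrite -(splitK i); case: (split i) => [a|j] /=.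
      - have /eqP := hx1 th a; rewrite -/x addr_eq0 => /eqP ->.
        rewrite memvN; apply: memv_suml => j _; apply: memvZ; apply: memv_span.
        rewrite -(nth_mktuple (fun j => x ord0 (rshift p j)) 0 j).
        by apply: mem_nth; rewrite size_tuple.
      - apply: memv_span.
        rewrite -(nth_mktuple (fun j => x ord0 (rshift p j)) 0 j).
        by apply: mem_nth; rewrite size_tuple.
    rewrite /free eqn_leq dim_span /= size_tuple.
    by rewrite card_ord; exact: leq_trans h1 h2.
  have E2 : th.2 = th'.2.
    by apply: r2v_inj; rewrite -hx0 -hx0 E.
  have E1 : th.1 = th'.1.
    apply/matrixP => a j.
    have := hx1 th a; have := hx1 th' a; rewrite E' -/x => Ha' Ha.
    have Hsum : \sum_(j < e.+2) (th.1 a j - th'.1 a j) *: z`_j = 0.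
      have -> : \sum_(j < e.+2) (th.1 a j - th'.1 a j) *: z`_j =
          \sum_j th.1 a j *: x ord0 (rshift p j) - \sum_j th'.1 a j *: x ord0 (rshift p j).
        rewrite -sumrB; apply: eq_bigr => k _.
        by rewrite (nth_mktuple _ 0) scalerBl.
      apply/eqP; rewrite subr_eq0; apply/eqP.
      by apply: (addrI (x ord0 (lshift e.+2 a))); rewrite Ha Ha'.
    have := (elimT freeP hz) _ Hsum j.
    by move/eqP; rewrite subr_eq0 => /eqP.
  by case: th th' E1 E2 {thS th'S E E' x z hz} => [? ?] [? ?] /= -> ->.
pose j1 : 'I_e.+2 := lift ord0 ord0.
pose K := ('cV[F]_p * 'cV[F]_p * 'rV[F]_(dim L) * 'rV[F]_(dim L))%type.
pose key (th : T) : K :=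
  (col ord0 th.1, col j1 th.1, th.2, v2r ((w th - c0) ord0 (rshift p j1))).
pose yf (k : K) := c0 + Yv e (fun a => k.1.1.1 a ord0) (fun a => k.1.1.2 a ord0)
  (r2v k.1.2) (r2v k.2).
have yc0 : forall k, (dR (yf k) c0 <= 2)%N.
  by move=> k; rewrite /dR /yf addrC addKr; apply: Yv_rk.
have yw : forall th, (dR (yf (key th)) (w th) <= e)%N.
  move=> th; rewrite /dR /yf lemZ.
  rewrite (@eq_Yv _ _ _ _ _ (fun a => th.1 a ord0) _ (fun a => th.1 a j1));
    try by move=> a; rewrite /key /= mxE.
  rewrite /key /= -hx0 v2rK.
  exact: Yx_rk.
have card_S : #|S| = (#|F| ^ (p * e.+2) * (#|F| ^ dim L).-1)%N.
  by rewrite cardsX cardsT cardsC1 !card_mx mul1n.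
have card_K : #|{: K}| = (#|F| ^ p * #|F| ^ p * #|F| ^ dim L * #|F| ^ dim L)%N.
  by rewrite !card_prod !card_mx !muln1 !mul1n.
rewrite -card_S -card_K leqNgt; apply/negP => /(pigeon key) [k Hk].
set Fk := [set t in S | key t == k] in Hk.
pose th_ (j : 'I_l) : T := enum_val (widen_ord Hk j).
have thF : forall j, th_ j \in Fk by move=> j; apply: enum_valP.
have thS : forall j, th_ j \in S by move=> j; have := thF j; rewrite inE => /andP[].
have thK : forall j, key (th_ j) = k by move=> j; have := thF j; rewrite inE => /andP[_ /eqP].
pose c (i : 'I_l.+1) := if unlift ord0 i is Some j then w (th_ j) else c0.
have := Hdec (yf k) c.
have cinj : injective c.
  move=> i1 i2; rewrite /c.
  case: (unliftP ord0 i1) => [j1'|] ->; case: (unliftP ord0 i2) => [j2'|] ->;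
    rewrite ?liftK ?unlift_none //.
  - move/winj => /(_ (thS _) (thS _)) /enum_val_inj /(congr1 val) /= E.
    by congr lift; apply: val_inj.
  - by move=> E; have := wne _ (thS j1'); rewrite E eqxx.
  - by move=> E; have := wne _ (thS j2'); rewrite E eqxx.
have cC : forall i, c i \in C.
  by move=> i; rewrite /c; case: (unlift ord0 i).
move/(_ cinj cC).
rewrite big_ord_recl /c unlift_none.
have Hs : (\sum_(i < l) dR (yf k) (if unlift ord0 (lift ord0 i) is Some j
     then w (th_ j) else c0) <= \sum_(i < l) e)%N.
  apply: leq_sum => i _; rewrite liftK -(thK i); exact: yw.
rewrite sum_nat_const card_ord in Hs.
move=> H; have := leq_trans H (leq_add (yc0 k) Hs).
rewrite ltnNge; move/negP; apply.
by rewrite mulnS leq_add2r.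
Qed.


Lemma arith_exp (q m p d l : nat) : (1 < q)%N -> (0 < m)%N ->
  (q ^ (p * d) * (q ^ m).-1 <= l.-1 * (q ^ p * q ^ p * q ^ m * q ^ m))%N ->
  (p * d <= l + 2 * p + m)%N.
Proof.
move=> hq hm H.
have h1 : (q ^ m.-1 <= (q ^ m).-1)%N.
  have -> : m = m.-1.+1 by rewrite prednK.
  rewrite expnS /=.
  have : (0 < q ^ m.-1)%N by rewrite expn_gt0; lia.
  nia.
have h2 : (l.-1 < q ^ l)%N.
  apply: leq_ltn_trans (ltn_expl _ hq); exact: leq_pred.
have h3 : (q ^ (p * d + m.-1) < q ^ (l + 2 * p + 2 * m))%N.
  rewrite expnD.
  apply: (leq_ltn_trans (leq_mul (leqnn _) h1)).
  apply: (leq_ltn_trans H).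
  have -> : (q ^ (l + 2 * p + 2 * m) = q ^ l * (q ^ p * q ^ p * q ^ m * q ^ m))%N.
    by rewrite -!expnD; congr (expn _ _); lia.
  rewrite ltn_pmul2r //.
  by rewrite !muln_gt0 !expn_gt0 (ltnW hq).
rewrite ltn_exp2l // in h3.
lia.
Qed.

Lemma rV0 (L : fieldType) (u v : 'rV[L]_0) : u = v.
Proof. by apply/rowP => -[]. Qed.

Lemma rV_neq_gt0 (L : fieldType) n (u v : 'rV[L]_n) : u != v -> (0 < n)%N.
Proof. by case: n u v => [|n] u v //; rewrite (rV0 u v) eqxx. Qed.

Lemma avg_conv (R : realType) (l n k S : nat) (r : R) :
  n%:R * r = (n - k)%:R -> (k <= n)%N ->
  l%:R * (1 - r) / l.+1%:R * n%:R < l.+1%:R^-1 * S%:R -> (l * k < S)%N.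
Proof.
move=> hr hk H.
have E : l%:R * (1 - r) / l.+1%:R * n%:R = (l * k)%:R / l.+1%:R.
  have hk' : k%:R = n%:R - n%:R * r :> R by rewrite hr natrB //; lra.
  rewrite natrM hk'; field.
  by rewrite addrC natr1 pnatr_eq0.
rewrite E [X in _ < X]mulrC ltr_pM2r ?invr_gt0 ?ltr0n // in H.
by rewrite -(ltr_nat R).
Qed.


Theorem theoremA1 (R : realType) (l : nat) : (2 <= l)%N ->
  exists c : R, 0 < c /\
  forall (F : finFieldType) (L : fieldExtType F) (n : nat) (C : seq 'rV[L]_n),
    (n <= \dim {:L})%N -> uniq C -> is_MRD C ->
    avg_list_decodable C (l%:R * (1 - rate R C) / l.+1%:R) l ->
    c * (n%:R * rate R C - 1) * (n%:R - l%:R - n%:R * rate R C + 1)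
      <= (\dim {:L})%:R.
Proof.
move=> hl; exists (4%:R^-1); split; first by rewrite invr_gt0 ltr0n.
move=> F L n C hnm Cu [d [[[u [v [uC vC uv duv]]] Cmin] Csize]] Hdec.
have hq : (1 < #|F|)%N := card_finNzRing_gt1 F.
have hm : (0 < \dim {:L})%N := adim_gt0 {:L}%AS.
have hdn : (d <= n)%N by rewrite -duv; exact: rk_le_n.
have hn : (0 < n)%N := rV_neq_gt0 uv.
have hr : n%:R * rate R C = (n - d).+1%:R.
  rewrite /rate Csize natrX lnXn ?ltr0n ?(ltnW hq) //.
  rewrite -[ln _ *+ _]mulr_natr addn1 !natrM.
  have h1 : ln (#|F|%:R : R) != 0 by rewrite gt_eqF // ln_gt0 // ltr1n.
  have h2 : (n%:R : R) != 0 by rewrite pnatr_eq0 -lt0n.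
  have h3 : ((\dim {:L})%:R : R) != 0 by rewrite pnatr_eq0 -lt0n.
  by field; rewrite h1 h2 h3.
have e1 : n%:R * rate R C - 1 = (n - d)%:R :> R by rewrite hr -natr1 addrK.
have e2 : n%:R - l%:R - n%:R * rate R C + 1 = d%:R - l%:R :> R.
  rewrite hr -natr1 natrB //; lra.
rewrite e1 e2.
have [hdl|hld] := leqP d l.
  apply: le_trans (ler0n _ _).
  apply: mulr_ge0_le0; first by rewrite mulr_ge0 ?invr_ge0 ?ler0n.
  by rewrite subr_le0 ler_nat.
have [e de] : exists e, d = e.+2 by exists (d - 2)%N; lia.
have [p np] : exists p, n = (p + d)%N by exists (n - d)%N; lia.
clear duv e1 e2; subst d n.
have Hdec' : forall y (c : 'I_l.+1 -> 'rV[L]_(p + e.+2)), injective c ->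
     (forall i, c i \in C) -> (l * e.+1 < \sum_i dR y (c i))%N.
  move=> y c ci cC.
  have := Hdec y c ci cC.
  rewrite -natr_sum.
  apply: (avg_conv (k := e.+1)); last lia.
  by rewrite hr; congr (_%:R); lia.
have Csize' : size C = (#|F| ^ (\dim {:L} * p.+1))%N.
  by rewrite Csize; congr (expn _ (_ * _)); lia.
have := key_bound hl Cu uC Cmin Csize' Hdec'.
rewrite -dimvf => /arith_exp => /(_ hq hm) H.
rewrite addnK -natrB; last by lia.
rewrite -mulrA -natrM.
have H2 : (p * (e.+2 - l) <= 4 * \dim {:L})%N.
  apply: leq_trans (leq_mul (leqnn p) (leq_subr l e.+2)) _.
  apply: leq_trans H _.
  move: hnm hld; rewrite /dimv; set m := mxrank _ => *; lia.
have H3 : (p * (e.+2 - l))%:R <= 4%:R * (\dim {:L})%:R :> R.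
  by rewrite -natrM ler_nat.
lra.
Qed.
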